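(* Let $m_c\in H$ be such that for every $\lambda\in\Lambda$ the local component has the form $m_\lambda=Y\,f_\lambda$ with $f_\lambda$ a power series in $s_\lambda$ (i.e. $G_0^\lambda=0$ for all $\lambda$). Write $f_\infty=\sum_{\ell\ge0}a_\ell s_\infty^\ell$ (with $a_0=0$). If $a_\ell=0$ for $\ell=0,1,\dots,2g+1$, then $m_c=0$.
   Context: Standing setup. Let $k$ be a finite field of odd characteristic $p$, $W(k)$ its ring of Witt vectors, $K$ the fraction field of $W(k)$, $|\cdot|$ the $p$-adic absolute value. Let $g\ge1$ and let $\lambda_1,\dots,\lambda_{2g+1}\in W(k)$ have pairwise distinct reductions modulo $p$. Put $Q(t)=\prod_{i=1}^{2g+1}(t-\lambda_i)$ and $h(t)=\frac{Q'(t)}{2Q(t)}$. Let $\Lambda=\{\lambda_1,\dots,\lambda_{2g+1},\infty\}$, $\Lambda_0=\Lambda\setminus\{\infty\}$. The local parameter at $\lambda\in\Lambda_0$ is $s_\lambda=t-\lambda$, and at $\infty$ it is $s_\infty=t^{-1}$. Let $B_K^\dagger$ be the ring of series $\sum_{\underline\ell\ge0}a_{\underline\ell}\,t^{\ell_0}\prod_{i}(t-\lambda_i)^{-\ell_i}$ ($a_{\underline\ell}\in K$) for which there is $\eta>1$ with $|a_{\underline\ell}|\eta^{\max_i\ell_i}\to0$; $\phi_\lambda(f)$ is the Laurent expansion of $f\in B_K^\dagger$ in $s_\lambda$. The principal part is $\Pr_\lambda(\sum a_\ell s_\lambda^\ell)=\sum_{\ell<0}a_\ell s_\lambda^\ell$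 for $\lambda\in\Lambda_0$ and $\Pr_\infty(\sum a_\ell s_\infty^\ell)=\sum_{\ell\le0}a_\ell s_\infty^\ell$; its expansion at another point $\mu$ is denoted $\phi_\mu(\cdot)$. For $\lambda\in\Lambda_0$, $\tilde R_{\lambda,c}$ is the space of $\sum_{\ell\ge0}a_\ell s_\lambda^\ell$ with $|a_\ell|\eta^\ell\to0$ for all $\eta<1$, and $R_{\infty,c}$ the analogous space of $\sum_{\ell\ge1}a_\ell s_\infty^\ell$. $B_c=\prod_{\lambda\in\Lambda_0}\tilde R_{\lambda,c}\times R_{\infty,c}$ is a $B_K^\dagger$-module via $(f\cdot G)^\mu=\phi_\mu(f)G^\mu-\sum_{\lambda\in\Lambda}\phi_\mu\big(\Pr_\lambda(\phi_\lambda(f)G^\lambda)\big)$. Let $A_K^\dagger=B_K^\dagger\oplus B_K^\dagger Y$ with $Y^2=Q(t)$, $\nabla_{GM}(1)=0$, $\nabla_{GM}(Y)=hY$; $M_c=A_K^\dagger\otimes_{B_K^\dagger}B_c$ with elements $m_c=1\otimes G_0+Y\otimes G_1$ ($G_0,G_1\in B_c$) and $\nabla_c(m_c)=1\otimes\partial_tG_0+Y\otimes(\partial_tG_1+h\cdot G_1)$, $\partial_t$ acting componentwise (as $-s_\infty^2\,d/ds_\infty$ on series in $s_\infty$). $H=\ker\nabla_c$ (the space $H^1_{MW,c}(V,\pi_*A_K^\dagger)$). Local components: $m_\lambda=G_0^\lambda+YG_1^\lambda$. *)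

(* Defs.v *)
From Stdlib Require Import Reals.
From HB Require Import structures.
From mathcomp Require Import all_boot all_order all_algebra all_field.
Set Implicit Arguments. Unset Strict Implicit. Unset Printing Implicit Defensive.
Import Order.TTheory GRing.Theory Num.Theory.
Local Open Scope ring_scope.

(* The field K = Frac W(k), characterised (Cohen structure theorem) as a      *)
(* complete discretely valued field of characteristic 0, unramified over Q_p  *)
(* (|p| = 1/p, value group p^Z) whose residue field is the finite field k    *)
(* (of characteristic p, p odd prime), via a residue map res : O_K -> k.      *)
Definition WittFrac (p : nat) (k : finFieldType) (K : fieldType)
    (absK : K -> R) (res : K -> k) : Prop :=
  [/\ (prime p /\ odd p) /\ p \in [pchar k] /\ [pchar K] =i pred0,
      (forall x : K, absK x = R0 <-> x = 0) /\
      (forall x y : K, absK (x * y) = Rmult (absK x) (absK y)) /\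
      (forall x y : K, Rle (absK (x + y)) (Rmax (absK x) (absK y))) /\
      absK (p%:R) = Rinv (INR p) /\
      (forall x : K, x <> 0 -> exists n : Z, absK x = powerRZ (INR p) n),
      (forall u : nat -> K,
         (forall eps : R, Rlt R0 eps -> exists N : nat, forall n m : nat,
            (N <= n)%N -> (N <= m)%N -> Rlt (absK (u n - u m)) eps) ->
         exists l : K, forall eps : R, Rlt R0 eps -> exists N : nat,
            forall n : nat, (N <= n)%N -> Rlt (absK (u n - l)) eps) &
      (* residue map O_K -> k : surjective ring morphism with kernel the maximal ideal *)
      [/\ res 1 = 1,
          (forall x y, Rle (absK x) R1 -> Rle (absK y) R1 -> res (x + y) = res x + res y),
          (forall x y, Rle (absK x) R1 -> Rle (absK y) R1 -> res (x * y) = res x * res y),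
          (forall x, Rle (absK x) R1 -> (res x = 0 <-> Rlt (absK x) R1)) &
          (forall a : k, exists x, Rle (absK x) R1 /\ res x = a)]].

Section Series.
Variable K : fieldType.

(* formal power series = coefficient sequences *)
Definition conv (u w : nat -> K) : nat -> K :=
  fun n => \sum_(i < n.+1) u i * w (n - i)%N.

(* inverse of a power series with invertible constant term *)
Fixpoint inv_list (u : nat -> K) (n : nat) : seq K :=
  match n with
  | 0 => [:: (u 0%N)^-1]
  | n'.+1 => let w := inv_list u n' in
      rcons w (- (u 0%N)^-1 * \sum_(i < n'.+1) u i.+1 * nth 0 w (n' - i)%N)
  end.
Definition ps_inv (u : nat -> K) : nat -> K := fun n => nth 0 (inv_list u n) n.

(* Laurent series sum_n lcoef n * s^(n + lval) *)
Record laurent := Laurent { lval : int; lcoef : nat -> K }.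

Definition lcoefZ (L : laurent) (l : int) : K :=
  match l - lval L with Posz n => lcoef L n | Negz _ => 0 end.

Definition ps_coefZ (G : nat -> K) (l : int) : K :=
  match l with Posz n => G n | Negz _ => 0 end.

Definition mulLP (L : laurent) (G : nat -> K) : laurent :=
  Laurent (lval L) (conv (lcoef L) G).

(* rational functions A/B, A B : {poly K}, B <> 0 *)
Definition ratf := ({poly K} * {poly K})%type.

(* expansion at a finite point mu in s = t - mu *)
Definition phi_fin (mu : K) (f : ratf) : laurent :=
  let A' := f.1 \Po ('X + mu%:P) in
  let B' := f.2 \Po ('X + mu%:P) in
  let e := find (fun c => c != 0) B' in
  Laurent (- (e%:Z)) (conv (fun n => A'`_n) (ps_inv (fun n => B'`_(n + e)))).

(* expansion at infinity in s = t^{-1} *)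
Definition rev_coef (A : {poly K}) : nat -> K :=
  fun n => if (n < size A)%N then A`_((size A).-1 - n) else 0.
Definition phi_inf (f : ratf) : laurent :=
  Laurent ((size f.2)%:Z - (size f.1)%:Z)
          (conv (rev_coef f.1) (ps_inv (rev_coef f.2))).

Definition negord (L : laurent) : nat :=
  match lval L with Posz _ => 0%N | Negz n => n.+1 end.

Definition Pr_fin (lam : K) (L : laurent) : ratf :=
  let e := negord L in
  (\sum_(j < e) lcoefZ L (- (j.+1)%:Z) *: ('X - lam%:P) ^+ (e - j.+1)%N,
   ('X - lam%:P) ^+ e).

(* principal part at infinity (terms s^l, l <= 0), a polynomial in t *)
Definition Pr_inf (L : laurent) : ratf :=
  (\sum_(j < (negord L).+1) lcoefZ L (- (j%:Z)) *: 'X^j, 1).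

End Series.

Section Curve.
Variables (K : fieldType) (n : nat) (lam : 'I_n -> K).
(* points of Lambda: Some i = lambda_i, None = infinity *)
Definition pt := option 'I_n.

Definition phi (mu : pt) (f : ratf K) : laurent K :=
  match mu with Some i => phi_fin (lam i) f | None => phi_inf f end.
Definition Pr (mu : pt) (L : laurent K) : ratf K :=
  match mu with Some i => Pr_fin (lam i) L | None => Pr_inf L end.

(* an element of B_c : one series per point of Lambda *)
Definition compfam := pt -> nat -> K.

Definition act (f : ratf K) (G : compfam) (mu : pt) : int -> K :=
  fun l => lcoefZ (mulLP (phi mu f) (G mu)) l
           - \sum_(la : pt) lcoefZ (phi mu (Pr la (mulLP (phi la f) (G la)))) l.

(* d/dt componentwise; at infinity it is -s^2 d/ds *)
Definition dt (mu : pt) (G : nat -> K) : nat -> K :=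
  match mu with
  | Some _ => fun m => (m.+1)%:R * G m.+1
  | None => fun m => match m with 0%N | 1%N => 0 | m'.+2 => - ((m'.+1)%:R * G m'.+1) end
  end.

Definition Qpoly : {poly K} := \prod_(i < n) ('X - (lam i)%:P).
Definition hrat : ratf K := (Qpoly^`(), 2%:R *: Qpoly).

(* m_c = 1 (x) G0 + Y (x) G1 lies in ker nabla_c *)
Definition in_H (G0 G1 : compfam) : Prop :=
  (forall mu m, dt mu (G0 mu) m = 0) /\
  (forall mu (l : int), ps_coefZ (dt mu (G1 mu)) l + act hrat G1 mu l = 0).
End Curve.

Definition in_Bc (K : fieldType) (absK : K -> R) (n : nat) (G : option 'I_n -> nat -> K) : Prop :=
  (forall (i : 'I_n) (eta : R), Rlt R0 eta -> Rlt eta R1 ->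
     Un_cv (fun l => Rmult (absK (G (Some i) l)) (pow eta l)) R0) /\
  G None 0%N = 0 /\
  (forall eta : R, Rlt R0 eta -> Rlt eta R1 ->
     Un_cv (fun l => Rmult (absK (G None l)) (pow eta l)) R0).

(* Main.v *)
Require Import Defs.
Set Warnings "-all".
From Stdlib Require Import Reals.
From HB Require Import structures.
From mathcomp Require Import all_boot all_order all_algebra all_field.
Set Implicit Arguments. Unset Strict Implicit. Unset Printing Implicit Defensive.
Import Order.TTheory GRing.Theory Num.Theory.
Local Open Scope ring_scope.

Lemma big_opt (K : fieldType) (I : finType) (F : option I -> K) :
  \sum_x F x = F None + \sum_i F (Some i).
Proof.
rewrite -big_enum /=.
have -> : enum {: option I} = None :: map Some (enum I).
  by rewrite !enumT [in LHS]unlock.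
rewrite big_cons big_map big_enum //.
Qed.

Section PS.
Variable K : fieldType.
Implicit Types (u w : nat -> K).

Lemma inv_list_size u n : size (inv_list u n) = n.+1.
Proof. by elim: n => [|n IH] //=; rewrite size_rcons IH. Qed.

Lemma inv_list_nth u n m : (m <= n)%N -> nth 0 (inv_list u n) m = ps_inv u m.
Proof.
elim: n => [|n IH]; first by rewrite leqn0 => /eqP ->.
rewrite leq_eqVlt => /orP [/eqP -> //|Hm].
by rewrite /= nth_rcons inv_list_size Hm IH.
Qed.

Lemma ps_invS u n : ps_inv u n.+1 =
  - (u 0%N)^-1 * \sum_(i < n.+1) u i.+1 * ps_inv u (n - i)%N.
Proof.
rewrite /ps_inv /= nth_rcons inv_list_size ltnn eqxx.
congr (_ * _); apply: eq_bigr => i _; congr (_ * _).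
by rewrite inv_list_nth // leq_subr.
Qed.

Lemma ps_inv_geom u a : u 0%N = 1 -> u 1%N = - a -> (forall i, u i.+2 = 0) ->
  forall n, ps_inv u n = a ^+ n.
Proof.
move=> h0 h1 h2; elim=> [|n IH]; first by rewrite /ps_inv /= h0 invr1 expr0.
rewrite ps_invS big_ord_recl /= h1 subn0 IH big1 ?addr0.
  by rewrite h0 invr1 mulN1r mulNr opprK exprS.
by move=> i _; rewrite h2 mul0r.
Qed.

Lemma conv0 u w : conv u w 0 = u 0%N * w 0%N.
Proof. by rewrite /conv big_ord1. Qed.

Lemma conv_const u w c : u 0%N = c -> (forall i, u i.+1 = 0) -> forall n, conv u w n = c * w n.
Proof.
move=> h0 h1 n; rewrite /conv big_ord_recl /= h0 subn0 big1 ?addr0 //.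
by move=> i _; rewrite h1 mul0r.
Qed.

Lemma conv_zero_r u w m : (forall j, (j <= m)%N -> w j = 0) -> forall n, (n <= m)%N -> conv u w n = 0.
Proof.
move=> hw n hn; rewrite /conv big1 // => i _; rewrite hw ?mulr0 //.
exact: leq_trans (leq_subr _ _) hn.
Qed.

Lemma conv_zero_l u w : (forall j, u j = 0) -> forall n, conv u w n = 0.
Proof. by move=> hu n; rewrite /conv big1 // => i _; rewrite hu mul0r. Qed.

Lemma conv_lead u w m : (forall j, (j < m)%N -> w j = 0) -> conv u w m = u 0%N * w m.
Proof.
move=> hw; rewrite /conv big_ord_recl /= subn0 big1 ?addr0 //.
move=> i _; rewrite hw ?mulr0 //=.
by rewrite /bump /= add1n; case: m hw i => [|m] hw i; [case: i|rewrite subSS ltnS leq_subr].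
Qed.

Lemma lcoefZ_zero (L : laurent K) l : (forall j, lcoef L j = 0) -> lcoefZ L l = 0.
Proof. by rewrite /lcoefZ; case: (l - lval L). Qed.

End PS.

Section CurveL.
Variables (K : fieldType) (n : nat) (lam : 'I_n -> K).
Hypothesis char0 : [pchar K] =i pred0.
Hypothesis laminj : forall i j, i != j -> lam i != lam j.

Lemma natK_neq0 m : (m%:R != 0 :> K) = (m != 0%N).
Proof. by rewrite (pcharf0P K).1. Qed.

Local Notation Q := (Qpoly lam).

Lemma sizeQ : size Q = n.+1.
Proof. by rewrite /Qpoly size_prod_XsubC /index_enum -enumT size_enum_ord. Qed.

Lemma monicQ : Q \is monic.
Proof. exact: monic_prod_XsubC. Qed.

Lemma Q_root i : Q.[lam i] = 0.
Proof.
rewrite /Qpoly horner_prod (bigD1 i) //= hornerXsubC subrr mul0r //.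
Qed.

Lemma dQ_neq0 i : Q^`().[lam i] != 0.
Proof.
rewrite /Qpoly (bigD1 i) //= derivM derivXsubC mul1r hornerD hornerM.
rewrite hornerXsubC subrr mul0r addr0 horner_prod.
rewrite prodf_seq_neq0; apply/allP => j _; apply/implyP => hj.
by rewrite hornerXsubC subr_eq0 eq_sym laminj.
Qed.

Lemma coef_dQ : Q^`()`_(n.-1) = n%:R.
Proof.
have hQn : Q`_n = 1.
  have := monicQ => /monicP; rewrite lead_coefE. by rewrite sizeQ.
rewrite coef_deriv; case: (posnP n) => [n0|npos].
  by rewrite nth_default ?sizeQ n0.
by rewrite prednK // hQn.
Qed.

Lemma size_dQ : (0 < n)%N -> size Q^`() = n.
Proof.
move=> n0; apply/eqP; rewrite eqn_leq; apply/andP; split.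
  have := lt_size_deriv (monic_neq0 monicQ); by rewrite sizeQ.
case: (ltnP n.-1 (size Q^`())) => [|h]; first by rewrite prednK.
have := coef_dQ; rewrite nth_default // => /esym/eqP; apply: contraLR => _.
by rewrite natK_neq0 -lt0n n0.
Qed.

Lemma find_one (p : {poly K}) : p`_0 = 0 -> p`_1 != 0 -> find (fun c => c != 0) p = 1%N.
Proof.
case: p => [s _] /=; case: s => [|x [|y r]] /=; rewrite ?eqxx //.
by move=> -> hy; rewrite eqxx /= hy.
Qed.

Let two_neq0 : (2%:R : K) != 0. Proof. by rewrite natK_neq0. Qed.

Lemma Bp0 c : ((2%:R *: Q) \Po ('X + c%:P))`_0 = (2%:R *: Q).[c].
Proof. by rewrite -horner_coef0 horner_comp hornerD hornerX hornerC add0r. Qed.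

Lemma Bp1 (P : {poly K}) c : (P \Po ('X + c%:P))`_1 = P^`().[c].
Proof.
have := coef_deriv (P \Po ('X + c%:P)) 0; rewrite mulr1n => <-.
rewrite -horner_coef0 deriv_comp derivD derivX derivC addr0 mulr1.
by rewrite horner_comp hornerD hornerX hornerC add0r.
Qed.

Lemma phi_fin_h i : lval (phi_fin (lam i) (hrat lam)) = - (1%:Z) /\
  lcoef (phi_fin (lam i) (hrat lam)) 0 = 2%:R^-1.
Proof.
have h0 : ((2%:R *: Q) \Po ('X + (lam i)%:P))`_0 = 0 by rewrite Bp0 hornerZ Q_root mulr0.
have h1 : ((2%:R *: Q) \Po ('X + (lam i)%:P))`_1 = 2%:R * (Q^`()).[lam i]
  by rewrite Bp1 derivZ hornerZ.
have hf := find_one h0.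
rewrite /phi_fin /= hf; last by rewrite h1 mulf_neq0 ?dQ_neq0.
split => //; rewrite conv0 /ps_inv /= add0n h1 -horner_coef0 horner_comp.
rewrite hornerD hornerX hornerC add0r invfM mulrCA divff ?mulr1 //; exact: dQ_neq0.
Qed.


Lemma Qlead : Q`_n = 1.
Proof. by have := monicQ => /monicP; rewrite lead_coefE sizeQ. Qed.

Lemma phi_inf_h : (0 < n)%N -> lval (phi_inf (hrat lam)) = 1 /\
  lcoef (phi_inf (hrat lam)) 0 = n%:R / 2%:R.
Proof.
move=> n0; rewrite /phi_inf /= size_scale // sizeQ size_dQ //; split.
  by rewrite -addn1 PoszD addrAC subrr add0r.
rewrite conv0 /ps_inv /= /rev_coef size_scale // sizeQ size_dQ // n0 /= !subn0.
by rewrite coef_dQ coefZ Qlead mulr1.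
Qed.

Lemma phi_zero mu (B : {poly K}) j : lcoef (phi lam mu (0, B)) j = 0.
Proof.
case: mu => [i|] /=; rewrite /phi_fin /phi_inf /=; apply: conv_zero_l => m.
  by rewrite comp_poly0 coef0.
by rewrite /rev_coef size_poly0.
Qed.

Lemma phi_inf_simple (c a : K) k :
  lcoefZ (phi_inf (c%:P, 'X - a%:P)) (Posz k.+1) = c * a ^+ k.
Proof.
have [->|c0] := eqVneq c 0.
  by rewrite mul0r lcoefZ_zero // => j; rewrite /phi_inf /= conv_zero_l // => m;
    rewrite /rev_coef polyC0 size_poly0.
rewrite /lcoefZ /phi_inf /= size_XsubC size_polyC c0 /=.
rewrite subn1 /=.
rewrite (@conv_const _ _ _ c); last first.
- by move=> i; rewrite /rev_coef size_polyC c0.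
- by rewrite /rev_coef size_polyC c0 /= coefC.
congr (_ * _); apply: ps_inv_geom.
- by rewrite /rev_coef size_XsubC /= coefB coefX coefC /= subr0.
- by rewrite /rev_coef size_XsubC /= coefB coefX coefC /= sub0r.
- by move=> i; rewrite /rev_coef size_XsubC.
Qed.


Lemma Pr_inf_h (G : nat -> K) : (0 < n)%N ->
  Pr lam None (mulLP (phi lam None (hrat lam)) G) = (0, 1).
Proof.
move=> n0; have [hl _] := phi_inf_h n0.
have hl' : lval (mulLP (phi lam None (hrat lam)) G) = 1 := hl.
rewrite /Pr /Pr_inf /negord hl' big_ord1 /lcoefZ hl' /=.
by rewrite scale0r.
Qed.

Lemma Pr_fin_h i (G : nat -> K) :
  Pr lam (Some i) (mulLP (phi lam (Some i) (hrat lam)) G) =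
  ((2%:R^-1 * G 0%N)%:P, 'X - (lam i)%:P).
Proof.
have [hl h0] := phi_fin_h i.
have hl' : lval (mulLP (phi lam (Some i) (hrat lam)) G) = - (1%:Z) := hl.
have h0' : lcoef (mulLP (phi lam (Some i) (hrat lam)) G) 0 = 2%:R^-1 * G 0%N.
  by rewrite -h0; exact: conv0.
rewrite /Pr /Pr_fin /negord hl' big_ord1 /lcoefZ hl'.
change (((lcoef (mulLP (phi lam (Some i) (hrat lam)) G) 0) *: ('X - (lam i)%:P) ^+ 0,
   ('X - (lam i)%:P) ^+ 1) = ((2%:R^-1 * G 0%N)%:P, 'X - (lam i)%:P)).
by rewrite h0' expr1 expr0 alg_polyC.
Qed.


Lemma vander_zero (c : 'I_n -> K) :
  (forall k, (k < n)%N -> \sum_j c j * lam j ^+ k = 0) -> forall i, c i = 0.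
Proof.
move=> h i.
pose P := \prod_(j | j != i) ('X - (lam j)%:P).
have hQ : Q = ('X - (lam i)%:P) * P by rewrite /Qpoly (bigD1 i).
have P0 : P != 0.
  by apply/monic_neq0; apply: monic_prod => j _; apply: monicXsubC.
have hs : (size P <= n)%N.
  have := sizeQ; rewrite hQ size_mul ?polyXsubC_eq0 // size_XsubC /=.
  move=> e; suff -> : size P = n by [].
  by apply/eqP; rewrite -eqSS -e addnC addn1.
have HPi : P.[lam i] != 0.
  rewrite horner_prod prodf_seq_neq0; apply/allP => j _; apply/implyP => hj.
  by rewrite hornerXsubC subr_eq0 eq_sym laminj.
have HPj j : j != i -> P.[lam j] = 0.
  by move=> hj; rewrite horner_prod (bigD1 j) //= hornerXsubC subrr mul0r.
have E : \sum_j c j * P.[lam j] = 0.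
  rewrite (eq_bigr (fun j => \sum_(k < n) P`_k * (c j * lam j ^+ k))); last first.
    by move=> j _; rewrite (horner_coef_wide _ hs) mulr_sumr; apply: eq_bigr => k _; rewrite mulrCA.
  rewrite exchange_big /= big1 // => k _.
  by rewrite -mulr_sumr h ?mulr0.
move: E; rewrite (bigD1 i) //= big1 ?addr0; last first.
  by move=> j hj; rewrite HPj ?mulr0.
by move/eqP; rewrite mulf_eq0 (negbTE HPi) orbF => /eqP.
Qed.


Lemma sum_Pr_zero mu l (G : option 'I_n -> nat -> K) : (0 < n)%N ->
  (forall j, G (Some j) 0%N = 0) ->
  \sum_la lcoefZ (phi lam mu (Pr lam la (mulLP (phi lam la (hrat lam)) (G la)))) l = 0.
Proof.
move=> n0 hG; apply: big1 => [[j|]] _.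
  by rewrite Pr_fin_h hG mulr0 polyC0; apply: lcoefZ_zero => m; apply: phi_zero.
by rewrite Pr_inf_h //; apply: lcoefZ_zero => m; apply: phi_zero.
Qed.

Lemma sum_Pr_inf k (G : option 'I_n -> nat -> K) : (0 < n)%N ->
  \sum_la lcoefZ (phi lam None (Pr lam la (mulLP (phi lam la (hrat lam)) (G la)))) (Posz k.+1)
  = \sum_j (2%:R^-1 * G (Some j) 0%N) * lam j ^+ k.
Proof.
move=> n0; rewrite big_opt Pr_inf_h // lcoefZ_zero ?add0r; last by move=> m; apply: phi_zero.
by apply: eq_bigr => j _; rewrite Pr_fin_h; apply: phi_inf_simple.
Qed.

Lemma natB_neq0 a b : a != b -> (a%:R - b%:R : K) != 0.
Proof.
have H u v : (u < v)%N -> (u%:R : K) != v%:R.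
  move=> lt; apply/eqP => e.
  have : ((v - u)%:R : K) == 0.
    by rewrite natrB ?(ltnW lt) // -e subrr.
  by rewrite -[_ == 0]negbK natK_neq0 subn_eq0 -ltnNge lt.
rewrite subr_eq0; case: (ltngtP a b) => h _ //; first exact: H.
by rewrite eq_sym; exact: H.
Qed.


Lemma half_eq m (x : K) : m%:R * x + 2%:R^-1 * x = 0 -> x = 0.
Proof.
move=> h; have : ((m.*2.+1)%:R : K) * x = 0.
  have -> : ((m.*2.+1)%:R : K) = 2%:R * (m%:R + 2%:R^-1).
    by rewrite -addn1 natrD mulrDr divff // -natrM mul2n.
  by rewrite -mulrA (mulrDl (m%:R)) h mulr0.
move/eqP; rewrite mulf_eq0 -[_ == 0]negbK natK_neq0 /=. by move/eqP.
Qed.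

Lemma inf_eq m (x : K) : odd n -> - (m%:R * x) + n%:R / 2%:R * x = 0 -> x = 0.
Proof.
move=> on h; have : ((n%:R - (m.*2)%:R) : K) * x = 0.
  have -> : ((n%:R - (m.*2)%:R) : K) = 2%:R * (- m%:R + n%:R / 2%:R).
    rewrite mulrDr mulrCA divff // mulr1 addrC mulrN -natrM mul2n //.
  by rewrite -mulrA (mulrDl (- m%:R)) mulNr h mulr0.
move/eqP; rewrite mulf_eq0 (negbTE (natB_neq0 _)) /=; first by move/eqP.
by apply/eqP => e; move: on; rewrite e odd_double.
Qed.

End CurveL.


Lemma lcoefZ_s1 (K : fieldType) (L : laurent K) k : lval L = 1 -> lcoefZ L (Posz k.+1) = lcoef L k.
Proof. by rewrite /lcoefZ => ->; rewrite /= subn1. Qed.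

Lemma lcoefZ_m1 (K : fieldType) (L : laurent K) m : lval L = - (1%:Z) -> lcoefZ L (Posz m - 1) = lcoef L m.
Proof. by rewrite /lcoefZ => ->; rewrite opprK subrK. Qed.

Theorem mainTheorem8 (p : nat) (k : finFieldType) (K : fieldType)
    (absK : K -> R) (res : K -> k) (g : nat)
    (lam : 'I_(2 * g + 1) -> K) (G0 G1 : option 'I_(2 * g + 1) -> nat -> K) :
  WittFrac p absK res ->
  (1 <= g)%N ->
  (forall i, Rle (absK (lam i)) R1) ->
  (forall i j, i != j -> res (lam i) != res (lam j)) ->
  in_Bc absK G0 -> in_Bc absK G1 ->
  in_H lam G0 G1 ->
  (forall mu m, G0 mu m = 0) ->
  (forall l, (l <= 2 * g + 1)%N -> G1 None l = 0) ->
  (forall mu m, G0 mu m = 0) /\ (forall mu m, G1 mu m = 0).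
Proof.
move=> [[_ [_ char0]] _ _ _] _ _ hres _ [_ [Ginf0 _]] [_ hH] hG0 hGinf.
split=> //.
have t0 : (2%:R : K) != 0 by rewrite (natK_neq0 char0).
set n := (2 * g + 1)%N.
have n0 : (0 < n)%N by rewrite /n addn1.
have on : odd n by rewrite /n addn1 /= mul2n odd_double.
have laminj : forall i j, i != j -> lam i != lam j.
  by move=> i j hij; apply/eqP => e; move: (hres i j hij); rewrite e eqxx.
have [hlinf hdinf] := phi_inf_h lam char0 n0.
have HA : forall j, G1 (Some j) 0%N = 0.
  have hc : forall j, 2%:R^-1 * G1 (Some j) 0%N = 0.
    apply: (vander_zero laminj (c := fun j => 2%:R^-1 * G1 (Some j) 0%N)) => kk hk.
    have := hH None (Posz kk.+1).
    rewrite /act sum_Pr_inf //.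
    have D1 : ps_coefZ (dt None (G1 None)) kk.+1 = 0.
      rewrite /ps_coefZ /dt; case: kk hk => [|k'] hk //=.
      by rewrite hGinf ?mulr0 ?oppr0 // ltnW.
    have D2 : lcoefZ (mulLP (phi lam None (hrat lam)) (G1 None)) kk.+1 = 0.
      rewrite lcoefZ_s1 //; apply: (@conv_zero_r _ _ _ kk) => // j hj.
      by apply: hGinf; apply: leq_trans hj (ltnW hk).
    by rewrite D1 D2 add0r sub0r => /eqP; rewrite oppr_eq0 => /eqP.
  move=> j; have /eqP := hc j.
  by rewrite mulf_eq0 invr_eq0 (negbTE t0) /= => /eqP.
have HB : forall i m, G1 (Some i) m = 0.
  move=> i; suff H : forall m j, (j < m)%N -> G1 (Some i) j = 0.
    by move=> m; apply: (H m.+1).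
  elim=> [|m IH] j // hj.
  move: hj; rewrite ltnS leq_eqVlt => /orP [/eqP ->|]; last exact: IH.
  have [hl h0] := phi_fin_h char0 laminj i.
  have := hH (Some i) (Posz m - 1).
  rewrite /act sum_Pr_zero // subr0 lcoefZ_m1; last exact: hl.
  rewrite (_ : lcoef (mulLP (phi lam (Some i) (hrat lam)) (G1 (Some i))) m
      = 2%:R^-1 * G1 (Some i) m); last by rewrite -h0; apply: conv_lead.
  case: m IH => [|m] IH; first by rewrite HA.
  have -> : (Posz m.+1 - 1) = Posz m by rewrite -addn1 PoszD addrK.
  exact: half_eq char0 m.+1 _.
have HC : forall m, G1 None m = 0.
  suff H : forall m j, (j < m)%N -> G1 None j = 0.
    by move=> m; apply: (H m.+1).
  elim=> [|m IH] j // hj.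
  move: hj; rewrite ltnS leq_eqVlt => /orP [/eqP ->|]; last exact: IH.
  case: m IH => [|m] IH; first exact: Ginf0.
  have := hH None (Posz m.+2).
  rewrite /act sum_Pr_zero // subr0 lcoefZ_s1; last exact: hlinf.
  rewrite (_ : lcoef (mulLP (phi lam None (hrat lam)) (G1 None)) m.+1
      = n%:R / 2%:R * G1 None m.+1); last by rewrite -hdinf; apply: conv_lead.
  exact: inf_eq char0 m.+1 _ on.
by case=> [i|] m; [apply: HB|apply: HC].
Qed.
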